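(* For every integer $n>1$, $$c_n(231,1423 : 231)=c_n(312,2314 : 312)=\begin{cases}\frac{7}{3}\cdot 4^{k-1}-\frac{1}{3} & \text{if } n=2k,\\ \frac{14}{3}\cdot 4^{k-1}-\frac{2}{3} & \text{if } n=2k+1.\end{cases}$$
   Context: $S_n$ is the symmetric group on $[n]=\{1,\dots,n\}$, and a permutation $\pi\in S_n$ is written in one-line notation $\pi=\pi_1\pi_2\cdots\pi_n$ with $\pi_i=\pi(i)$. For $\tau\in S_k$, $k\le n$, $\pi$ contains $\tau$ if there are indices $i_1<\dots<i_k$ with $\pi_{i_s}>\pi_{i_t}$ iff $\tau_s>\tau_t$ for all $1\le s<t\le k$; otherwise $\pi$ avoids $\tau$. $\pi^2$ denotes the composition $\pi\circ\pi$. For patterns $\sigma_1,\sigma_2,\rho$, $c_n(\sigma_1,\sigma_2 : \rho)$ denotes the number of permutations $\pi\in S_n$ such that $\pi$ avoids both $\sigma_1$ and $\sigma_2$ and $\pi^2$ avoids $\rho$. *)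

(* Defs.v *)
From mathcomp Require Import all_boot all_order all_algebra all_fingroup.
Set Implicit Arguments. Unset Strict Implicit. Unset Printing Implicit Defensive.

(* Permutations of [n] are elements of 'S_n acting on 'I_n = {0,...,n-1};
   values are shifted by one with respect to the paper, which does not
   affect order-isomorphism.  A pattern tau in S_k is given by its one-line
   notation as a list of naturals [:: tau_1; ...; tau_k]. *)

Definition contains (n : nat) (pi : 'S_n) (tau : seq nat) : bool :=
  [exists f : {ffun 'I_(size tau) -> 'I_n},
    [forall s : 'I_(size tau), forall t : 'I_(size tau), (s < t) ==>
       ((f s < f t) &&
        ((pi (f t) < pi (f s)) == (nth 0 tau t < nth 0 tau s)))]].

Definition avoids (n : nat) (pi : 'S_n) (tau : seq nat) : bool :=
  ~~ contains pi tau.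

Definition c_count (n : nat) (sigma1 sigma2 rho : seq nat) : nat :=
  #|[set pi : 'S_n | [&& avoids pi sigma1, avoids pi sigma2
                      & avoids (pi * pi)%g rho]]|.

(* Main.v *)
Require Import Defs.
From mathcomp Require Import all_boot all_order all_algebra all_fingroup.
From mathcomp Require Import zify lra.
Set Implicit Arguments. Unset Strict Implicit. Unset Printing Implicit Defensive.

Definition av231 (N : nat) (f : nat -> nat) :=
  forall i j k, i < j -> j < k -> k < N -> ~ (f k < f i /\ f i < f j).
Definition av1423 (N : nat) (f : nat -> nat) :=
  forall i j k l, i < j -> j < k -> k < l -> l < N ->
    ~ (f i < f k /\ f k < f l /\ f l < f j).
Definition av312 (N : nat) (f : nat -> nat) :=
  forall i j k, i < j -> j < k -> k < N -> ~ (f j < f k /\ f k < f i).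
Definition av2314 (N : nat) (f : nat -> nat) :=
  forall i j k l, i < j -> j < k -> k < l -> l < N ->
    ~ (f k < f i /\ f i < f j /\ f j < f l).
Definition sq (f : nat -> nat) x := f (f x).

Lemma php m (g : nat -> nat) :
  (forall x, x <= m -> g x < m) ->
  (forall x y, x <= m -> y <= m -> g x = g y -> x = y) -> False.
Proof.
move=> Hg Hi.
pose h (x : 'I_m.+1) : 'I_m := Ordinal (Hg x (ltn_ord x)).
have hi : injective h.
  move=> a b /(congr1 val) /= E; apply: val_inj => /=.
  by apply: Hi => //; rewrite -ltnS.
by move: (leq_card h hi); rewrite !card_ord ltnn.
Qed.

Lemma incid m (h : nat -> nat) :
  (forall x y, x < y -> y < m -> h x < h y) ->
  (forall x, x < m -> h x < m) -> forall x, x < m -> h x = x.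
Proof.
move=> Hinc Hr.
have lo : forall x, x < m -> x <= h x.
  elim=> [|x IH] Hx //.
  have := IH (ltnW Hx); have := Hinc x x.+1 (ltnSn x) Hx; lia.
have hi : forall k, k < m -> h (m.-1 - k) <= m.-1 - k.
  elim=> [|k IH] Hk.
    have := Hr m.-1; rewrite subn0; lia.
  have := IH (ltnW Hk); have := Hinc (m.-1 - k.+1) (m.-1 - k); lia.
move=> x Hx; have := lo x Hx; have := hi (m.-1 - x); 
have -> : m.-1 - (m.-1 - x) = x by lia.
lia.
Qed.

Lemma av231_le N M f : M <= N -> av231 N f -> av231 M f.
Proof. move=> MN H i j k ij jk kM; apply: H => //; lia. Qed.
Lemma av1423_le N M f : M <= N -> av1423 N f -> av1423 M f.
Proof. move=> MN H i j k l ij jk kl lM; apply: H => //; lia. Qed.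

Lemma av231_ext N f g : (forall x, x < N -> f x = g x) -> av231 N f -> av231 N g.
Proof.
move=> E H i j k ij jk kN; rewrite -!E; try lia; exact: H.
Qed.
Lemma av1423_ext N f g : (forall x, x < N -> f x = g x) -> av1423 N f -> av1423 N g.
Proof.
move=> E H i j k l ij jk kl lN; rewrite -!E; try lia; exact: H.
Qed.

Lemma av231_sub N M f h : (forall x y, x < y -> y < M -> h x < h y) ->
  (forall x, x < M -> h x < N) -> av231 N f -> av231 M (fun x => f (h x)).
Proof.
move=> Hi Hr H i j k ij jk kM; apply: H.
- apply: Hi => //; lia. - apply: Hi => //; lia. - exact: Hr.
Qed.
Lemma av1423_sub N M f h : (forall x y, x < y -> y < M -> h x < h y) ->
  (forall x, x < M -> h x < N) -> av1423 N f -> av1423 M (fun x => f (h x)).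
Proof.
move=> Hi Hr H i j k l ij jk kl lM; apply: H.
- apply: Hi => //; lia. - apply: Hi => //; lia. - apply: Hi => //; lia. - exact: Hr.
Qed.

Lemma shape_of N f g i :
 (forall x, x < N -> f x < N) ->
 (forall x y, x < N -> y < N -> f x = f y -> x = y) ->
 (forall v, v < N -> g v < N /\ f (g v) = v) ->
 av231 N f -> av1423 N f -> 0 < i -> i < N -> f i = N.-1 ->
 (forall x, x < i -> f x < i) /\ (forall x, i <= x -> x < N -> f x = N.-1 - (x - i)).
Proof.
move=> Hr Hinj Hg H231 H1423 i0 iN fi.
have A : forall x y, x < i -> i < y -> y < N -> f x < f y.
  move=> x y xi iy yN.
  have fxy : f x <> f y by move=> E; have := Hinj _ _ (ltn_trans xi iN) yN E; lia.
  have fxi : f x <> f i by move=> E; have := Hinj _ _ (ltn_trans xi iN) iN E; lia.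
  have := H231 x i y xi iy yN; have := Hr x (ltn_trans xi iN); lia.
have B : forall x, x < i -> f x < i.
  move=> x xi; case: (ltnP (f x) i) => // fxge; exfalso.
  apply: (@php i g).
    move=> v vi.
    have vN : v < N by lia.
    case: (Hg v vN) => gN fg.
    case: (ltngtP (g v) i) => // [gi|gi].
      have := A x (g v) xi gi gN; lia.
    move: fg; rewrite gi fi => E.
    have E2 : f x = f i by have := Hr x (ltn_trans xi iN); lia.
    have := Hinj _ _ (ltn_trans xi iN) iN E2; lia.
  move=> a b ai bi E.
  case: (Hg a ltac:(lia)) => _ fa; case: (Hg b ltac:(lia)) => _ fb.
  by rewrite -fa -fb E.
have C : forall y, i <= y -> y < N -> i <= f y.
  move=> y iy yN; case: (leqP i (f y)) => // fyi; exfalso.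
  have yi : i < y.
    rewrite ltn_neqAle iy andbT; apply/eqP => E; move: fyi; rewrite -E fi; lia.
  apply: (@php i (fun v => f (if v < i then v else y))).
    move=> v vi; case: ifP => // vi'; exact: B.
  move=> a b ai bi; case: ifP => ai'; case: ifP => bi' E.
  - by have := Hinj a b ltac:(lia) ltac:(lia) E.
  - have := Hinj a y ltac:(lia) yN E; lia.
  - have := Hinj y b yN ltac:(lia) E; lia.
  - lia.
have D : forall y w, i <= y -> y < w -> w < N -> f w < f y.
  move=> y w iy yw wN.
  have fwy : f w <> f y by move=> E; have := Hinj w y wN ltac:(lia) E; lia.
  have fwi : f w <> f i by move=> E; have := Hinj _ _ wN iN E; lia.
  case: (ltngtP i y) => [iy'|iy'|E]; last first.
  - rewrite -E fi; have := Hr w wN; lia.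
  - lia.
  have := H1423 0 i y w i0 iy' yw wN.
  have := A 0 y i0 iy' ltac:(lia).
  have := Hr w wN; rewrite fi; lia.
split=> // x ix xN.
have := @incid (N - i) (fun x => f (N.-1 - x) - i).
move=> /(_ _ _ (N.-1 - x) ltac:(lia)).
have -> : N.-1 - (N.-1 - x) = x by lia.
move=> H; suff: f x - i = N.-1 - x by have := C x ix xN; lia.
apply: H.
  move=> a b ab bN.
  have := D (N.-1 - b) (N.-1 - a) ltac:(lia) ltac:(lia) ltac:(lia).
  have := C (N.-1 - b) ltac:(lia) ltac:(lia).
  have := C (N.-1 - a) ltac:(lia) ltac:(lia). lia.
move=> a aN; have := Hr (N.-1 - a) ltac:(lia). lia.
Qed.

Definition shape N i f :=
  (forall x, x < i -> f x < i) /\ (forall x, i <= x -> x < N -> f x = N.-1 - (x - i)).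

Lemma shape_P N i f : shape N i f -> i <= N ->
  (av231 N f <-> av231 i f) /\ (av1423 N f <-> av1423 i f) /\
  (av231 N (sq f) <-> av231 i (sq f)).
Proof.
move=> [S1 S2] iN; split; [|split]; split; try exact: (av231_le iN); try exact: (av1423_le iN).
- move=> H a b c ab bc cN.
  case: (ltnP c i) => ci; first by apply: H.
  case: (ltnP a i) => ai.
    have := S1 a ai; have := S2 c ci cN; lia.
  have := S2 a ai ltac:(lia); have := S2 b ltac:(lia) ltac:(lia); lia.
- move=> H a b c d ab bc cd dN.
  case: (ltnP d i) => di; first by apply: H.
  case: (ltnP c i) => ci.
    have := S1 b ltac:(lia); have := S2 d di dN; lia.
  have := S2 c ci ltac:(lia); have := S2 d di dN; lia.
- move=> H a b c ab bc cN.
  case: (ltnP c i) => ci; first by apply: H.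
  have sqc : sq f c = c.
    rewrite /sq S2 // S2; lia.
  case: (ltnP a i) => ai.
    have : sq f a < i by rewrite /sq; exact: (S1 _ (S1 _ ai)).
    lia.
  have sqa : sq f a = a by rewrite /sq S2 ?S2; lia.
  lia.
Qed.

Definition Cf N r x := if x < N - r then N.-1 - x else x - (N - r).

Lemma Cf_lt N r x : x < N -> Cf N r x < N.
Proof. rewrite /Cf; case: ifP; lia. Qed.

Lemma Cf_inj N r x y : x < N -> y < N -> Cf N r x = Cf N r y -> x = y.
Proof. rewrite /Cf; case: ifP; case: ifP; lia. Qed.

Lemma sqCf N r x : 2 * r <= N -> x < N ->
  sq (Cf N r) x = if x < r then r.-1 - x else if x < N - r then x else (N - r) + N.-1 - x.
Proof.
move=> rN xN; rewrite /sq /Cf.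
case: (ltnP x (N - r)) => h1; case: (ltnP (N.-1 - x) (N - r)) => h2;
case: (ltnP (x - (N - r)) (N - r)) => h3; case: (ltnP x r) => h4; lia.
Qed.

Lemma Z_bwd N r : 0 < r -> 2 * r <= N ->
  av231 N (Cf N r) /\ av1423 N (Cf N r) /\ av231 N (sq (Cf N r)).
Proof.
move=> r0 rN; split; [|split].
- move=> a b c ab bc cN; rewrite /Cf.
  case: ifP; case: ifP; case: ifP; lia.
- move=> a b c d ab bc cd dN; rewrite /Cf.
  case: ifP; case: ifP; case: ifP; case: ifP; lia.
- move=> a b c ab bc cN.
  have aN : a < N by lia. have bN : b < N by lia.
  rewrite (sqCf rN aN) (sqCf rN bN) (sqCf rN cN).
  do ?case: ifP; lia.
Qed.

Lemma Z_fwd N f g : 2 <= N ->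
 (forall x, x < N -> f x < N) ->
 (forall x y, x < N -> y < N -> f x = f y -> x = y) ->
 (forall v, v < N -> g v < N /\ f (g v) = v) ->
 av231 N f -> av1423 N f -> av231 N (sq f) -> f 0 = N.-1 ->
 exists r, 0 < r /\ 2 * r <= N /\ forall x, x < N -> f x = Cf N r x.
Proof.
move=> N2 Hr Hinj Hg H231 H1423 Hsq f0.
have exP : exists d, (N <= d) || (f d != N.-1 - d) by exists N; rewrite leqnn.
case: (ex_minnP exP) => d Pd dmin.
have Hpre : forall x, x < d -> f x = N.-1 - x.
  move=> x xd; case: (boolP ((N <= x) || (f x != N.-1 - x))) => [/dmin|]; first lia.
  by rewrite negb_or negbK => /andP [_ /eqP].
have dN : d <= N by apply: dmin; rewrite leqnn.
have d0 : 0 < d.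
  rewrite lt0n; apply/eqP => E; move: Pd; rewrite E f0 subn0 eqxx orbF; lia.
case: (ltnP d N) => dN'; last first.
  exists 1; split; [lia|split; [lia|]] => x xN; rewrite Hpre /Cf; [case: ifP; lia | lia].
have fd : f d <> N.-1 - d by apply/eqP; move: Pd; rewrite leqNgt dN'.
have [r Er] : exists r, r = N - d by eauto.
have V : forall x, d <= x -> x < N -> f x < r.
  move=> x dx xN; case: (ltnP (f x) r) => // h; exfalso.
  have fxN := Hr x xN.
  have E : f (N.-1 - f x) = f x by rewrite Hpre; lia.
  have := Hinj (N.-1 - f x) x ltac:(lia) xN E; lia.
have [p Ep] : exists p, p = g r.-1 by eauto.
case: (Hg r.-1 ltac:(lia)); rewrite -Ep => pN fp.
have dp : d < p.
  case: (ltnP p d) => h; first by have := Hpre p h; lia.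
  rewrite ltn_neqAle h andbT; apply/eqP => E; move: fd; rewrite E fp; lia.
case: (leqP r d) => rd.
- have S1 : forall x, d <= x -> x < N -> sq f x = N.-1 - f x.
    by move=> x dx xN; rewrite /sq Hpre //; have := V x dx xN; lia.
  have S2 : forall x, d <= x -> x < N -> sq f (N.-1 - x) = f x.
    by move=> x dx xN; rewrite /sq (Hpre (N.-1 - x)); [congr f; lia| lia].
  have pN1 : p = N.-1.
    case: (ltnP p N.-1) => h; last lia.
    exfalso.
    have fdN : f d <> f N.-1.
      by move=> E; have := Hinj d N.-1 ltac:(lia) ltac:(lia) E; lia.
    have fNr : f N.-1 <> r.-1.
      by move=> E; rewrite -fp in E; have := Hinj N.-1 p ltac:(lia) ltac:(lia) E; lia.
    have := V d (leqnn d) dN'; have := V N.-1 ltac:(lia) ltac:(lia).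
    case: (ltnP (f d) (f N.-1)) => h2 h3 h4.
      apply: (Hsq 0 (N.-1 - p) (N.-1 - d)); try lia.
      have e0 := S2 N.-1 ltac:(lia) ltac:(lia); rewrite subnn in e0.
      rewrite e0 (S2 p) ?(S2 d); lia.
    apply: (H231 d p N.-1); try lia; rewrite fp; lia.
  have inc : forall x y, d <= x -> x < y -> y < N -> f x < f y.
    move=> x y dx xy yN.
    have fxy : f x <> f y by move=> E; have := Hinj x y ltac:(lia) yN E; lia.
    have fxr : f x <> r.-1.
      by move=> E; rewrite -fp in E; have := Hinj x p ltac:(lia) ltac:(lia) E; lia.
    have := V x dx ltac:(lia); have := V y ltac:(lia) yN.
    case: (ltnP y N.-1) => yN1 h1 h2; last first.
      have -> : y = p by lia.
      rewrite fp; lia.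
    case: (ltnP (f x) (f y)) => // h; exfalso.
    have fN : f N.-1 = r.-1 by rewrite -pN1.
    apply: (Hsq x y N.-1) => //; try lia.
    rewrite !S1 //; lia.
  have Eq : forall j, j < r -> f (d + j) = j.
    apply: incid.
      move=> a b ab br; apply: inc; lia.
    move=> a ar; apply: V; lia.
  exists r; split; [lia|split; [lia|]].
  move=> x xN; rewrite /Cf; case: ifP => h.
    rewrite Hpre; lia.
  have := Eq (x - d) ltac:(lia).
  have -> : d + (x - d) = x by lia.
  lia.
- exfalso.
  have Vi : forall v, v < r -> d <= g v.
    move=> v vr; case: (Hg v ltac:(lia)) => gN fg.
    case: (ltnP (g v) d) => // h; have := Hpre _ h; lia.
  have := @shape_of r (fun j => f (d + j)) (fun v => g v - d) (p - d).
  case.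
  + move=> x xr; apply: V; lia.
  + move=> x y xr yr E; have := Hinj (d + x) (d + y) ltac:(lia) ltac:(lia) E; lia.
  + move=> v vr; case: (Hg v ltac:(lia)) => gN fg; have := Vi v vr => h.
    split; first lia.
    by have -> : d + (g v - d) = g v by lia.
  + apply: (av231_sub (h := fun j => d + j)) H231.
      move=> x y; lia.
    move=> x; lia.
  + apply: (av1423_sub (h := fun j => d + j)) H1423.
      move=> x y; lia.
    move=> x; lia.
  + lia.
  + lia.
  + by have -> : d + (p - d) = p by lia.
  move=> T1 T2.
  case: (Hg 0 ltac:(lia)) => zN fz.
  have dz := Vi 0 ltac:(lia).
  have zp : g 0 < p.
    case: (ltnP (g 0) p) => // h; exfalso.
    have := T2 (g 0 - d) ltac:(lia) ltac:(lia).
    have -> : d + (g 0 - d) = g 0 by lia.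
    lia.
  have sqz : sq f (g 0) = N.-1 by rewrite /sq fz f0.
  have fN : f N.-1 = p - d.
    have := T2 (N.-1 - d) ltac:(lia) ltac:(lia).
    have -> : d + (N.-1 - d) = N.-1 by lia.
    lia.
  have sq0 : sq f 0 = p - d by rewrite /sq f0.
  case: (leqP d (p - d)) => qd.
    have := T1 (p - d - d) ltac:(lia).
    have -> : d + (p - d - d) = p - d by lia.
    move=> h.
    apply: (Hsq 0 (g 0) N.-1); try lia.
    rewrite sqz sq0 /sq fN; lia.
  case: (ltnP r.-1 p) => rp.
    have := T1 (r.-1 - d) ltac:(lia).
    have -> : d + (r.-1 - d) = r.-1 by lia.
    move=> h.
    apply: (Hsq 0 (g 0) p); try lia.
    rewrite sqz sq0 /sq fp; lia.
  have := T2 (p + r.-1 - d - d) ltac:(lia) ltac:(lia).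
  have -> : d + (p + r.-1 - d - d) = p + r.-1 - d by lia.
  move=> h.
  have := T1 0 ltac:(lia); rewrite addn0 => h0.
  apply: (Hsq 0 (g 0) (p + r.-1 - d)); try lia.
  rewrite sqz sq0 /sq h.
  have -> : r.-1 - (p + r.-1 - d - d - (p - d)) = d by lia.
  lia.
Qed.

Lemma contains3 n (t : 'S_n) a b c :
  contains t [:: a; b; c] =
  [exists i : 'I_n, exists j : 'I_n, exists k : 'I_n,
    [&& i < j, j < k, (t j < t i) == (b < a), (t k < t i) == (c < a)
      & (t k < t j) == (c < b)]].
Proof.
apply/existsP/existsP.
- case=> F /forallP H.
  have o0 : 0 < 3 by []. have o1 : 1 < 3 by []. have o2 : 2 < 3 by [].
  have h01 := implyP (forallP (H (Ordinal o0)) (Ordinal o1)) isT.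
  have h02 := implyP (forallP (H (Ordinal o0)) (Ordinal o2)) isT.
  have h12 := implyP (forallP (H (Ordinal o1)) (Ordinal o2)) isT.
  move: h01 h02 h12 => /= /andP [e01 c01] /andP [e02 c02] /andP [e12 c12].
  exists (F (Ordinal o0)); apply/existsP; exists (F (Ordinal o1)).
  apply/existsP; exists (F (Ordinal o2)).
  by rewrite e01 e12 c01 c02 c12.
- case=> i /existsP [j /existsP [k /and5P [ij jk c01 c02 c12]]].
  exists [ffun s : 'I_3 => nth i [:: i; j; k] s].
  apply/forallP => s; apply/forallP => u; apply/implyP.
  case: s => [[|[|[|s]]] Hs] //; case: u => [[|[|[|u]]] Hu] //= _;
  rewrite !ffunE /= ?ij ?jk ?c01 ?c02 ?c12 //.
  by rewrite (ltn_trans ij jk).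
Qed.

Lemma contains4 n (t : 'S_n) a b c d :
  contains t [:: a; b; c; d] =
  [exists i : 'I_n, exists j : 'I_n, exists k : 'I_n, exists l : 'I_n,
    [&& i < j, j < k, k < l,
      [&& (t j < t i) == (b < a), (t k < t i) == (c < a) & (t l < t i) == (d < a)]
      & [&& (t k < t j) == (c < b), (t l < t j) == (d < b)
      & (t l < t k) == (d < c)]]].
Proof.
apply/existsP/existsP.
- case=> F /forallP H.
  have o0 : 0 < 4 by []. have o1 : 1 < 4 by []. have o2 : 2 < 4 by [].
  have o3 : 3 < 4 by [].
  have h01 := implyP (forallP (H (Ordinal o0)) (Ordinal o1)) isT.
  have h02 := implyP (forallP (H (Ordinal o0)) (Ordinal o2)) isT.
  have h03 := implyP (forallP (H (Ordinal o0)) (Ordinal o3)) isT.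
  have h12 := implyP (forallP (H (Ordinal o1)) (Ordinal o2)) isT.
  have h13 := implyP (forallP (H (Ordinal o1)) (Ordinal o3)) isT.
  have h23 := implyP (forallP (H (Ordinal o2)) (Ordinal o3)) isT.
  move: h01 h02 h03 h12 h13 h23 => /= /andP [e01 c01] /andP [e02 c02]
    /andP [e03 c03] /andP [e12 c12] /andP [e13 c13] /andP [e23 c23].
  exists (F (Ordinal o0)); apply/existsP; exists (F (Ordinal o1)).
  apply/existsP; exists (F (Ordinal o2)); apply/existsP; exists (F (Ordinal o3)).
  by rewrite e01 e12 e23 c01 c02 c03 c12 c13 c23.
- case=> i /existsP [j /existsP [k /existsP [l /and5P [ij jk kl /and3P [c01 c02 c03] /and3P [c12 c13 c23]]]]].
  exists [ffun s : 'I_4 => nth i [:: i; j; k; l] s].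
  apply/forallP => s; apply/forallP => u; apply/implyP.
  have ik := ltn_trans ij jk; have jl := ltn_trans jk kl; have il := ltn_trans ik kl.
  case: s => [[|[|[|[|s]]]] Hs] //; case: u => [[|[|[|[|u]]]] Hu] //= _;
  by rewrite !ffunE /= ?ij ?jk ?kl ?ik ?jl ?il ?c01 ?c02 ?c03 ?c12 ?c13 ?c23.
Qed.

Definition fn n (t : 'S_n) (x : nat) : nat :=
  if (insub x : option 'I_n) is Some i then val (t i) else x.

Lemma fnE n (t : 'S_n) (i : 'I_n) : fn t i = t i.
Proof. by rewrite /fn valK. Qed.

Lemma fn_ord n (t : 'S_n) x (H : x < n) : fn t x = t (Ordinal H).
Proof. by rewrite -fnE. Qed.

Lemma fn_lt n (t : 'S_n) x : x < n -> fn t x < n.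
Proof. by move=> H; rewrite (fn_ord t H). Qed.

Lemma fn_inj n (t : 'S_n) x y : x < n -> y < n -> fn t x = fn t y -> x = y.
Proof.
move=> Hx Hy; rewrite (fn_ord t Hx) (fn_ord t Hy) => /val_inj /perm_inj.
by move/(congr1 val).
Qed.

Lemma fn_inv n (t : 'S_n) v : v < n -> fn t^-1 v < n /\ fn t (fn t^-1 v) = v.
Proof.
move=> Hv; split; first exact: fn_lt.
by rewrite (fn_ord _ Hv) fnE permKV.
Qed.

Lemma fnM n (s t : 'S_n) x : x < n -> fn (s * t)%g x = fn t (fn s x).
Proof. by move=> Hx; rewrite (fn_ord _ Hx) (fn_ord s Hx) fnE permM. Qed.

Definition Pn N f := av231 N f /\ av1423 N f /\ av231 N (sq f).

Lemma av231E n (t : 'S_n) : ~~ contains t [:: 2; 3; 1] <-> av231 n (fn t).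
Proof.
rewrite contains3; split.
- move=> H i j k ij jk kn [h1 h2]; move/negP: H; apply.
  have jn : j < n by lia. have iN : i < n by lia.
  move: h1 h2; rewrite (fn_ord t iN) (fn_ord t jn) (fn_ord t kn) => h1 h2.
  apply/existsP; exists (Ordinal iN); apply/existsP; exists (Ordinal jn).
  apply/existsP; exists (Ordinal kn); rewrite /= ij jk h1 /=.
  rewrite ltnNge (ltnW h2) /=.
  by rewrite (ltn_trans h1 h2).
- move=> H; apply/negP; case/existsP=> i /existsP [j /existsP [k /and5P [ij jk c01 c02 c12]]].
  apply: (H i j k ij jk (ltn_ord k)); rewrite !fnE.
  move: c01 c02 c12 => /= /eqP c01 /eqP c02 /eqP c12.
  have : (t i : nat) <> t j by move=> /val_inj /perm_inj E; move: ij; rewrite E ltnn.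
  move: c01 c02; lia.
Qed.

Lemma tneq n (t : 'S_n) (i j : 'I_n) : i < j -> (t i : nat) <> t j.
Proof. by move=> ij /val_inj /perm_inj E; move: ij; rewrite E ltnn. Qed.

Lemma av1423E n (t : 'S_n) : ~~ contains t [:: 1; 4; 2; 3] <-> av1423 n (fn t).
Proof.
rewrite contains4; split.
- move=> H i j k l ij jk kl ln [h1 [h2 h3]]; move/negP: H; apply.
  have kn : k < n by lia. have jn : j < n by lia. have iN : i < n by lia.
  move: h1 h2 h3; rewrite (fn_ord t iN) (fn_ord t jn) (fn_ord t kn) (fn_ord t ln) => h1 h2 h3.
  apply/existsP; exists (Ordinal iN); apply/existsP; exists (Ordinal jn).
  apply/existsP; exists (Ordinal kn); apply/existsP; exists (Ordinal ln).
  apply/and5P; split => //; apply/and3P; split; apply/eqP => /=; lia.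
- move=> H; apply/negP; case/existsP=> i /existsP [j /existsP [k /existsP [l
    /and5P [ij jk kl /and3P [c01 c02 c03] /and3P [c12 c13 c23]]]]].
  apply: (H i j k l ij jk kl (ltn_ord l)); rewrite !fnE.
  move: c01 c02 c03 c12 c13 c23 => /= /eqP c01 /eqP c02 /eqP c03 /eqP c12 /eqP c13 /eqP c23.
  have := tneq (t:=t) ij; have := tneq (t:=t) jk; have := tneq (t:=t) kl.
  have := tneq (t:=t) (ltn_trans ij jk); have := tneq (t:=t) (ltn_trans jk kl).
  have := tneq (t:=t) (ltn_trans ij (ltn_trans jk kl)).
  lia.
Qed.

Lemma av312E n (t : 'S_n) : ~~ contains t [:: 3; 1; 2] <-> av312 n (fn t).
Proof.
rewrite contains3; split.
- move=> H i j k ij jk kn [h1 h2]; move/negP: H; apply.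
  have jn : j < n by lia. have iN : i < n by lia.
  move: h1 h2; rewrite (fn_ord t iN) (fn_ord t jn) (fn_ord t kn) => h1 h2.
  apply/existsP; exists (Ordinal iN); apply/existsP; exists (Ordinal jn).
  apply/existsP; exists (Ordinal kn).
  apply/and5P; split => //; apply/eqP => /=; lia.
- move=> H; apply/negP; case/existsP=> i /existsP [j /existsP [k /and5P [ij jk c01 c02 c12]]].
  apply: (H i j k ij jk (ltn_ord k)); rewrite !fnE.
  move: c01 c02 c12 => /= /eqP c01 /eqP c02 /eqP c12.
  have := tneq (t:=t) ij; have := tneq (t:=t) jk; have := tneq (t:=t) (ltn_trans ij jk).
  lia.
Qed.

Lemma av2314E n (t : 'S_n) : ~~ contains t [:: 2; 3; 1; 4] <-> av2314 n (fn t).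
Proof.
rewrite contains4; split.
- move=> H i j k l ij jk kl ln [h1 [h2 h3]]; move/negP: H; apply.
  have kn : k < n by lia. have jn : j < n by lia. have iN : i < n by lia.
  move: h1 h2 h3; rewrite (fn_ord t iN) (fn_ord t jn) (fn_ord t kn) (fn_ord t ln) => h1 h2 h3.
  apply/existsP; exists (Ordinal iN); apply/existsP; exists (Ordinal jn).
  apply/existsP; exists (Ordinal kn); apply/existsP; exists (Ordinal ln).
  apply/and5P; split => //; apply/and3P; split; apply/eqP => /=; lia.
- move=> H; apply/negP; case/existsP=> i /existsP [j /existsP [k /existsP [l
    /and5P [ij jk kl /and3P [c01 c02 c03] /and3P [c12 c13 c23]]]]].
  apply: (H i j k l ij jk kl (ltn_ord l)); rewrite !fnE.
  move: c01 c02 c03 c12 c13 c23 => /= /eqP c01 /eqP c02 /eqP c03 /eqP c12 /eqP c13 /eqP c23.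
  have := tneq (t:=t) ij; have := tneq (t:=t) jk; have := tneq (t:=t) kl.
  have := tneq (t:=t) (ltn_trans ij jk); have := tneq (t:=t) (ltn_trans jk kl).
  have := tneq (t:=t) (ltn_trans ij (ltn_trans jk kl)).
  lia.
Qed.

Definition PB n (t : 'S_n) :=
  [&& avoids t [:: 2; 3; 1], avoids t [:: 1; 4; 2; 3] & avoids (t * t)%g [:: 2; 3; 1]].
Definition PB2 n (t : 'S_n) :=
  [&& avoids t [:: 3; 1; 2], avoids t [:: 2; 3; 1; 4] & avoids (t * t)%g [:: 3; 1; 2]].

Lemma PB_iff n (t : 'S_n) : PB t <-> Pn n (fn t).
Proof.
rewrite /PB /avoids /Pn; split.
- case/and3P => /av231E h1 /av1423E h2 /av231E h3; split => //; split => //.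
  apply: av231_ext h3 => x xn; rewrite fnM //.
- case=> h1 [h2 h3]; apply/and3P; split; [exact/av231E|exact/av1423E|].
  apply/av231E; apply: av231_ext h3 => x xn; rewrite fnM //.
Qed.

Definition Pn2 N f := av312 N f /\ av2314 N f /\ av312 N (sq f).

Lemma av312_ext N f g : (forall x, x < N -> f x = g x) -> av312 N f -> av312 N g.
Proof. move=> E H i j k ij jk kN; rewrite -!E; try lia; exact: H. Qed.

Lemma PB2_iff n (t : 'S_n) : PB2 t <-> Pn2 n (fn t).
Proof.
rewrite /PB2 /avoids /Pn2; split.
- case/and3P => /av312E h1 /av2314E h2 /av312E h3; split => //; split => //.
  apply: av312_ext h3 => x xn; rewrite fnM //.
- case=> h1 [h2 h3]; apply/and3P; split; [exact/av312E|exact/av2314E|].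
  apply/av312E; apply: av312_ext h3 => x xn; rewrite fnM //.
Qed.

Lemma Pn_ext N f g : (forall x, x < N -> f x = g x) -> (forall x, x < N -> f x < N) ->
  Pn N f -> Pn N g.
Proof.
move=> E R [h1 [h2 h3]]; split; [|split].
- exact: av231_ext h1.
- exact: av1423_ext h2.
- apply: av231_ext h3 => x xN; rewrite /sq -!E //; exact: R.
Qed.

Lemma shape_Pn N i f : shape N i f -> i <= N -> (Pn N f <-> Pn i f).
Proof.
move=> S iN; have [e1 [e2 e3]] := shape_P S iN; rewrite /Pn; tauto.
Qed.

Lemma fn_lift n (i : 'I_n.+1) (s : 'S_n) x : x < n.+1 ->
  fn (lift_perm i ord_max s) x =
  if x < i then fn s x else if x == i then n else fn s x.-1.
Proof.
move=> xn; rewrite (fn_ord _ xn).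
case: (unliftP i (Ordinal xn)) => [k|] E.
- rewrite E lift_perm_lift /= /bump.
  have := fn_lt s (ltn_ord k); rewrite fnE => skn.
  rewrite leqNgt skn /= add0n.
  move: (congr1 val E) => /= ->; rewrite /bump.
  case: (leqP i k) => ik /=.
    rewrite ltnNge (leq_trans ik (leqnSn _)) /= -fnE.
    by have -> : (1 + k == i) = false by apply/eqP; lia.
  by rewrite add0n ik fnE.
- rewrite E lift_perm_id /=.
  by move: (congr1 val E) => /= ->; rewrite ltnn eqxx.
Qed.

Lemma X_claim n (s : 'S_n) : PB (lift_perm ord_max ord_max s) <-> PB s.
Proof.
rewrite !PB_iff.
set f := fn _.
have Ef : forall x, x < n -> f x = fn s x.
  by move=> x xn; rewrite /f fn_lift /=; [rewrite xn | lia].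
have S : shape n.+1 n f.
  split.
    by move=> x xn; rewrite Ef //; exact: fn_lt.
  move=> x nx xn; have -> : x = n by lia.
  by rewrite /f fn_lift //= ltnn eqxx; lia.
rewrite (shape_Pn S (leqnSn n)); split; apply: Pn_ext => x xn; rewrite ?Ef //;
  exact: fn_lt.
Qed.

Lemma Y_claim n (i : 'I_n.+1) (s : 'S_n) : 0 < i -> i < n ->
  (PB (lift_perm i ord_max s) <-> PB s /\ fn s i = n.-1).
Proof.
move=> i0 iN.
set t := lift_perm i ord_max s.
have Ft : forall x, x < n.+1 -> fn t x =
   if x < i then fn s x else if x == i then n else fn s x.-1 by move=> x; exact: fn_lift.
have Eti : fn t i = n by rewrite Ft // ltnn eqxx.
have Elo : forall x, x < i -> fn t x = fn s x by move=> x xi; rewrite Ft ?xi //; lia.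
have Ehi : forall x, i < x -> x < n.+1 -> fn t x = fn s x.-1.
  move=> x ix xn; rewrite Ft //; have -> : (x < i) = false by lia.
  by have -> : (x == i) = false by apply/eqP; lia.
rewrite !PB_iff; split.
- move=> P; have P' := P.
  case: P => h1 [h2 h3].
  have [S1 S2] := shape_of (fun x => @fn_lt _ t x) (fun x y => @fn_inj _ t x y)
    (fun v => @fn_inv _ t v) h1 h2 i0 (ltn_trans iN (ltnSn n)) Eti.
  have Ss : shape n i (fn s).
    split.
      by move=> x xi; rewrite -Elo //; exact: S1.
    move=> x ix xn; rewrite -[x]/(x.+1.-1) -Ehi; try lia.
    rewrite S2 /=; lia.
  have Hi : Pn i (fn t) by apply/(shape_Pn (conj S1 S2)); [lia|].
  split.
    apply/(shape_Pn Ss); first lia.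
    apply: Pn_ext Hi => x xi; [exact: Elo | exact: S1].
  case: Ss => _ T2; rewrite T2 //; lia.
- case=> P si.
  case: (P) => h1 [h2 h3].
  have [S1 S2] := shape_of (fun x => @fn_lt _ s x) (fun x y => @fn_inj _ s x y)
    (fun v => @fn_inv _ s v) h1 h2 i0 iN si.
  have St : shape n.+1 i (fn t).
    split.
      by move=> x xi; rewrite Elo //; exact: S1.
    move=> x ix xn; case: (ltngtP i x) => [ix'|ix'|ex].
    - rewrite Ehi //; have := S2 x.-1 ltac:(lia) ltac:(lia); lia.
    - lia.
    - by rewrite -ex Eti /=; lia.
  apply/(shape_Pn St); first lia.
  have Hi : Pn i (fn s) by apply/(shape_Pn (conj S1 S2)); [lia|].
  apply: Pn_ext Hi => x xi; [by rewrite Elo | exact: S1].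
Qed.

Definition Cfun m r (x : 'I_m.+1) : 'I_m.+1 := inord (Cf m.+1 r x).
Arguments Cfun : clear implicits.

Lemma Cfun_inj m r : injective (Cfun m r).
Proof.
move=> x y /(congr1 val); rewrite /= !inordK; try exact: Cf_lt.
by move/Cf_inj => E; apply: val_inj; apply: E.
Qed.

Definition Cperm m r : 'S_m.+1 := perm (@Cfun_inj m r).

Lemma fn_C m r x : x < m.+1 -> fn (Cperm m r) x = Cf m.+1 r x.
Proof. by move=> H; rewrite (fn_ord _ H) permE /= inordK //; exact: Cf_lt. Qed.

Lemma Z_count m : 0 < m ->
  #|[set t : 'S_m.+1 | PB t && (t ord0 == ord_max)]| = m.+1./2.
Proof.
move=> m0.
have half_lt : forall r, r < m.+1./2 -> r.+1 * 2 <= m.+1.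
  by move=> r; rewrite geq_half_double -muln2.
have -> : [set t : 'S_m.+1 | PB t && (t ord0 == ord_max)] =
    (fun r : 'I_(m.+1./2) => Cperm m r.+1) @: [set: 'I_(m.+1./2)].
  apply/setP => t; rewrite !inE; apply/idP/imsetP.
  - case/andP => /PB_iff [h1 [h2 h3]] /eqP t0.
    have f0 : fn t 0 = m.+1.-1 by rewrite (fn_ord _ (ltn0Sn m)) /=; move: t0 => /(congr1 val).
    have [r [r0 [rN E]]] := Z_fwd (m0 : 1 < m.+1) (fun x => @fn_lt _ t x)
      (fun x y => @fn_inj _ t x y) (fun v => @fn_inv _ t v) h1 h2 h3 f0.
    have Hr : r.-1 < m.+1./2 by rewrite geq_half_double -muln2; lia.
    exists (Ordinal Hr); first by rewrite inE.
    apply/permP => x; apply/ord_inj; rewrite -!fnE E // fn_C //=.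
    by rewrite prednK.
  - case=> r _ ->; apply/andP; split.
      apply/PB_iff; have := half_lt r (ltn_ord r) => hr.
      apply: (@Pn_ext _ (Cf m.+1 r.+1)).
      + by move=> x xn; rewrite fn_C.
      + by move=> x xn; exact: Cf_lt.
      + apply: Z_bwd; lia.
    apply/eqP/ord_inj; rewrite -fnE fn_C //= /Cf.
    have := half_lt r (ltn_ord r); case: ifP => /= ? ?; lia.
rewrite card_imset ?cardsT ?card_ord //.
move=> r1 r2 E; apply: ord_inj.
have := half_lt r1 (ltn_ord r1); have := half_lt r2 (ltn_ord r2).
have := congr1 (fun t => fn t m) E; rewrite /= !fn_C // /Cf.
do 2 case: ifP; lia.
Qed.
Lemma S1_all (t : 'S_1) : PB t.
Proof.
apply/PB_iff; split; [|split].
- move=> i j k; lia.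
- move=> i j k l; lia.
- move=> i j k; lia.
Qed.

Lemma S1_count : #|[set t : 'S_1 | PB t]| = 1 /\
  #|[set t : 'S_1 | PB t && (t ord0 == ord_max)]| = 1.
Proof.
have E1 : [set t : 'S_1 | PB t] = setT by apply/setP => t; rewrite !inE S1_all.
have E2 : [set t : 'S_1 | PB t && (t ord0 == ord_max)] = setT.
  apply/setP => t; rewrite !inE S1_all /=; apply/eqP/val_inj.
  by case: (t ord0) => [[|k] Hk].
by rewrite E1 E2 cardsT card_Sn.
Qed.

Definition aa n := #|[set t : 'S_n | PB t]|.
Definition I0 m := #|[set t : 'S_m.+1 | PB t && (t ord0 == ord_max)]|.

Lemma L_inj2 n : injective (fun p : 'I_n.+1 * 'S_n => lift_perm p.1 ord_max p.2).
Proof.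
move=> [i1 s1] [i2 s2] /= E.
have Ei : i1 = i2.
  apply: (@perm_inj _ (lift_perm i1 ord_max s1)).
  by rewrite lift_perm_id E lift_perm_id.
subst i2; congr (_, _); apply/permP => k; apply: (@lift_inj _ ord_max).
by rewrite -(lift_perm_lift i1 ord_max s1 k) E lift_perm_lift.
Qed.

Lemma L_onto n (t : 'S_n.+1) : exists i s, t = lift_perm i ord_max s.
Proof.
have hc : #|'S_n.+1| <= #|{: 'I_n.+1 * 'S_n}|.
  by rewrite card_prod card_ord !card_Sn factS.
have := inj_card_onto (@L_inj2 n) hc t.
by case/codomP => [[i s] ->]; exists i, s.
Qed.

Lemma split_card (T : finType) (P Q : pred T) :
  #|[set x | P x]| = #|[set x | P x && Q x]| + #|[set x | P x && ~~ Q x]|.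
Proof.
rewrite -(cardsID [set x | Q x] [set x | P x]); congr (_ + _); apply: eq_card => x;
by rewrite !inE // andbC.
Qed.

Lemma X_count m : #|[set t : 'S_m.+2 | PB t && (t ord_max == ord_max)]| = aa m.+1.
Proof.
have -> : [set t : 'S_m.+2 | PB t && (t ord_max == ord_max)] =
   (lift_perm ord_max ord_max) @: [set s : 'S_m.+1 | PB s].
  apply/setP => t; rewrite !inE; apply/andP/imsetP.
  - case=> P /eqP tM; have [i [s Et]] := L_onto t.
    have Ei : i = ord_max.
      by apply: (@perm_inj _ t); rewrite tM Et lift_perm_id.
    subst; exists s; last by [].
    by rewrite inE; exact: (proj1 (X_claim s) P).
  - case=> s; rewrite inE => P ->; split; first exact: (proj2 (X_claim s) P).
    by rewrite lift_perm_id.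
rewrite card_imset //.
by move=> s1 s2 E; have := @L_inj2 m.+1 (ord_max, s1) (ord_max, s2) E; case.
Qed.


Lemma Y_count m :
  #|[set t : 'S_m.+2 | (PB t && ~~ (t ord_max == ord_max)) && ~~ (t ord0 == ord_max)]| =
  #|[set s : 'S_m.+1 | PB s && ~~ (s ord0 == ord_max)]|.
Proof.
pose phi (s : 'S_m.+1) : 'S_m.+2 :=
  lift_perm (widen_ord (leqnSn _) ((s^-1)%g ord_max)) ord_max s.
have -> : [set t : 'S_m.+2 | (PB t && ~~ (t ord_max == ord_max)) && ~~ (t ord0 == ord_max)]
    = phi @: [set s : 'S_m.+1 | PB s && ~~ (s ord0 == ord_max)].
  apply/setP => t; rewrite !inE; apply/idP/imsetP.
  - case/andP => /andP [P tM] t0; have [i [s Et]] := L_onto t.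
    have ti : t i = ord_max by rewrite Et lift_perm_id.
    have iM : i != ord_max by apply/eqP => E; move: tM; rewrite -E ti E eqxx.
    have i0 : i != ord0 by apply/eqP => E; move: t0; rewrite -E ti eqxx.
    have iN : (i : nat) < m.+1.
      have := ltn_ord i; have : (i : nat) != m.+1.
        by apply: contra iM => /eqP h; apply/eqP/ord_inj.
      lia.
    have ip : 0 < (i : nat).
      by rewrite lt0n; apply: contra i0 => /eqP h; apply/eqP/ord_inj.
    have [P' si] := proj1 (Y_claim s ip iN) (eq_ind _ (fun u => PB u) P _ Et).
    have Esi : s (Ordinal iN) = ord_max by apply: ord_inj; rewrite -fnE /= si.
    exists s.
      rewrite inE P' /=; apply: contra i0 => /eqP E.
      have : Ordinal iN = ord0 by apply: (@perm_inj _ s); rewrite Esi E.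
      by move/(congr1 val) => /= h; apply/eqP/ord_inj.
    rewrite /phi Et; congr lift_perm; apply: ord_inj => /=.
    by rewrite -Esi permK.
  - case=> s; rewrite inE => /andP [P s0] ->.
    have sj : s ((s^-1)%g ord_max) = ord_max by rewrite permKV.
    move: sj; rewrite /phi.
    move: ((s^-1)%g ord_max) => j sj.
    have j0 : 0 < (widen_ord (leqnSn m.+1) j : nat).
      rewrite /= lt0n; apply: contra s0 => /eqP h.
      by rewrite -sj; apply/eqP; congr (s _); apply: ord_inj.
    have jN : (widen_ord (leqnSn m.+1) j : nat) < m.+1 by rewrite /= ltn_ord.
    have ti : lift_perm (widen_ord (leqnSn m.+1) j) ord_max s (widen_ord (leqnSn _) j) = ord_max
      by rewrite lift_perm_id.
    apply/andP; split; first (apply/andP; split).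
    + apply: (proj2 (Y_claim s j0 jN)); split => //.
      by rewrite /= fnE sj.
    + apply/eqP => E; have := perm_inj (etrans ti (esym E)).
      by move/(congr1 (@nat_of_ord _)) => /= h; have := ltn_ord j; lia.
    + apply/eqP => E; have := perm_inj (etrans ti (esym E)).
      by move/(congr1 (@nat_of_ord _)) => /= h; move: j0; rewrite /= h.
rewrite card_imset //.
move=> s1 s2 E.
by have := @L_inj2 m.+1 (_, s1) (_, s2) E; case.
Qed.

Definition rcf N (f : nat -> nat) x := N.-1 - f (N.-1 - x).

Lemma rc312 N f : (forall x, x < N -> f x < N) -> (av312 N f <-> av231 N (rcf N f)).
Proof.
move=> R; rewrite /rcf; split.
- move=> H i j k ij jk kN [h1 h2].
  have := R (N.-1 - i) ltac:(lia); have := R (N.-1 - j) ltac:(lia);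
  have := R (N.-1 - k) ltac:(lia) => r1 r2 r3.
  apply: (H (N.-1 - k) (N.-1 - j) (N.-1 - i)); lia.
- move=> H i j k ij jk kN [h1 h2].
  apply: (H (N.-1 - k) (N.-1 - j) (N.-1 - i)); try lia.
  have -> : N.-1 - (N.-1 - k) = k by lia.
  have -> : N.-1 - (N.-1 - j) = j by lia.
  have -> : N.-1 - (N.-1 - i) = i by lia.
  have := R i ltac:(lia); have := R j ltac:(lia); have := R k ltac:(lia). lia.
Qed.

Lemma rc2314 N f : (forall x, x < N -> f x < N) -> (av2314 N f <-> av1423 N (rcf N f)).
Proof.
move=> R; rewrite /rcf; split.
- move=> H i j k l ij jk kl lN [h1 [h2 h3]].
  have := R (N.-1 - i) ltac:(lia); have := R (N.-1 - j) ltac:(lia);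
  have := R (N.-1 - k) ltac:(lia); have := R (N.-1 - l) ltac:(lia) => r1 r2 r3 r4.
  apply: (H (N.-1 - l) (N.-1 - k) (N.-1 - j) (N.-1 - i)); lia.
- move=> H i j k l ij jk kl lN [h1 [h2 h3]].
  apply: (H (N.-1 - l) (N.-1 - k) (N.-1 - j) (N.-1 - i)); try lia.
  have -> : N.-1 - (N.-1 - k) = k by lia.
  have -> : N.-1 - (N.-1 - j) = j by lia.
  have -> : N.-1 - (N.-1 - i) = i by lia.
  have -> : N.-1 - (N.-1 - l) = l by lia.
  have := R i ltac:(lia); have := R j ltac:(lia); have := R k ltac:(lia);
  have := R l ltac:(lia). lia.
Qed.

Lemma rc_P N f : (forall x, x < N -> f x < N) -> (Pn2 N f <-> Pn N (rcf N f)).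
Proof.
move=> R.
have Rs : forall x, x < N -> sq f x < N by move=> x xN; exact: (R _ (R _ xN)).
have E : forall x, x < N -> rcf N (sq f) x = sq (rcf N f) x.
  move=> x xN; rewrite /rcf /sq; have := R (N.-1 - x) ltac:(lia) => h.
  by have -> : N.-1 - (N.-1 - f (N.-1 - x)) = f (N.-1 - x) by lia.
rewrite /Pn2 /Pn (rc312 R) (rc2314 R) (rc312 Rs).
split; case=> h1 [h2 h3]; split => //; split => //.
- by apply: av231_ext h3.
- by apply: av231_ext h3 => x xN; rewrite E.
Qed.

Definition wrev n : 'S_n := perm (@rev_ord_inj n).
Definition rc n (t : 'S_n) : 'S_n := (wrev n * t * wrev n)%g.

Lemma fn_rc n (t : 'S_n) x : x < n -> fn (rc t) x = rcf n (fn t) x.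
Proof.
move=> xn; rewrite /rc fnM // fnM //.
have W : forall y, y < n -> fn (wrev n) y = n.-1 - y.
  by move=> y yn; rewrite (fn_ord _ yn) permE /=; lia.
rewrite /rcf W // W //; apply: fn_lt; lia.
Qed.

Lemma rc_inv n (t : 'S_n) : rc (rc t) = t.
Proof.
have ww : (wrev n * wrev n = 1)%g.
  by apply/permP => x; rewrite permM !permE rev_ordK.
by rewrite /rc !mulgA ww mul1g -!mulgA ww mulg1.
Qed.

Lemma PB2_rc n (t : 'S_n) : PB2 t = PB (rc t).
Proof.
have R := fun x => @fn_lt _ t x.
apply/idP/idP.
- move/PB2_iff/(rc_P R) => P; apply/PB_iff.
  apply: Pn_ext P => x xn; first by rewrite fn_rc.
  rewrite /rcf; have := R (n.-1 - x) ltac:(lia); lia.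
- move/PB_iff => P; apply/PB2_iff; apply/(rc_P R).
  apply: Pn_ext P => x xn; first by rewrite fn_rc.
  exact: fn_lt.
Qed.

Lemma count_sym n : #|[set t : 'S_n | PB2 t]| = #|[set t : 'S_n | PB t]|.
Proof.
have -> : [set t : 'S_n | PB2 t] = (@rc n) @^-1: [set t : 'S_n | PB t].
  by apply/setP => t; rewrite !inE PB2_rc.
apply: card_preimset => t1 t2 E.
by rewrite -(rc_inv t1) E rc_inv.
Qed.

Lemma I0_le m : I0 m <= aa m.+1.
Proof.
rewrite /aa /I0 (split_card (fun s : 'S_m.+1 => PB s) (fun s => s ord0 == ord_max)).
exact: leq_addr.
Qed.

Lemma rec m : aa m.+2 = aa m.+1 + (aa m.+1 - I0 m) + I0 m.+1.
Proof.
have S := split_card (fun s : 'S_m.+1 => PB s) (fun s => s ord0 == ord_max).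
have eA : #|[set x : 'S_m.+1 | PB x]| = aa m.+1 by [].
have eI : #|[set x : 'S_m.+1 | PB x && (x ord0 == ord_max)]| = I0 m by [].
cbv beta in S; rewrite eA eI in S.
rewrite /aa (split_card (fun t : 'S_m.+2 => PB t) (fun t => t ord_max == ord_max)) X_count.
rewrite (split_card (fun t : 'S_m.+2 => PB t && ~~ (t ord_max == ord_max))
  (fun t => t ord0 == ord_max)) Y_count.
have -> : [set x : 'S_m.+2 | (PB x && ~~ (x ord_max == ord_max)) && (x ord0 == ord_max)]
    = [set x | PB x && (x ord0 == ord_max)].
  apply/setP => t; rewrite !inE; apply/idP/idP.
    by case/andP => /andP [-> _] ->.
  case/andP => P E; rewrite P E andbT /=; apply/eqP => E2.
  move/eqP: E => E; have := perm_inj (etrans E (esym E2)).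
  by move/(congr1 (@nat_of_ord _)).
have eZ : #|[set x : 'S_m.+2 | PB x && (x ord0 == ord_max)]| = I0 m.+1 by [].
have eY : #|[set s : 'S_m.+1 | PB s && ~~ (s ord0 == ord_max)]| = aa m.+1 - I0 m.
  by rewrite [in RHS]S addKn.
have le : I0 m <= aa m.+1 by rewrite S leq_addr.
rewrite eZ eA eY; lia.
Qed.

Lemma I0_val m : 0 < m -> I0 m = m.+1./2.
Proof. exact: Z_count. Qed.

Lemma half_odd k : (k.*2.+1)./2 = k.
Proof. exact: uphalf_double. Qed.
Lemma half_even k : (k.*2.+2)./2 = k.+1.
Proof. by rewrite -doubleS doubleK. Qed.

Lemma closed k : 3 * aa (k.*2.+2) + 1 = 7 * 4 ^ k /\ 3 * aa (k.*2.+3) + 2 = 14 * 4 ^ k.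
Proof.
have [a1 i0] := S1_count; rewrite -/(aa 1) -/(I0 0) in a1 i0.
have a2 : aa 2 = 2 by rewrite rec a1 i0 I0_val.
elim: k => [|k [IH1 IH2]].
  split; first by rewrite a2.
  by rewrite rec a2 !I0_val.
have h3 : (k.*2.+3)./2 = k.+1 := half_odd k.+1.
have h4 : (k.*2.+4)./2 = k.+2 := half_even k.+1.
have h5 : ((k.*2.+4).+1)./2 = k.+2 := half_odd k.+2.
have l1 := I0_le (k.*2.+2); rewrite I0_val // h3 in l1.
have l2 := I0_le (k.*2.+3); rewrite I0_val // h4 in l2.
have e1 : aa (k.*2.+4) = 2 * aa (k.*2.+3) + 1.
  rewrite (rec k.*2.+2) !I0_val // h3 h4; lia.
have e2 : aa ((k.*2.+4).+1) = 2 * aa (k.*2.+4).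
  rewrite (rec k.*2.+3) !I0_val // h4 h5; lia.
rewrite doubleS expnS; lia.
Qed.

Unset Implicit Arguments.
Import GRing.Theory.
Local Open Scope ring_scope.

Theorem theorem4p2 (n : nat) : (1 < n)%N ->
  let f : rat :=
    if ~~ odd n then 7%:R / 3%:R * 4%:R ^+ (n./2).-1 - 1 / 3%:R
    else 14%:R / 3%:R * 4%:R ^+ (n./2).-1 - 2%:R / 3%:R in
  (c_count n [:: 2; 3; 1]%N [:: 1; 4; 2; 3]%N [:: 2; 3; 1]%N)%:R = f /\
  (c_count n [:: 3; 1; 2]%N [:: 2; 3; 1; 4]%N [:: 3; 1; 2]%N)%:R = f.
Proof.
move=> n1 f.
have e1 : c_count n [:: 2; 3; 1]%N [:: 1; 4; 2; 3]%N [:: 2; 3; 1]%N = aa n by [].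
have e2 : c_count n [:: 3; 1; 2]%N [:: 2; 3; 1; 4]%N [:: 3; 1; 2]%N = aa n.
  exact: count_sym.
rewrite e1 e2; suff : (aa n)%:R = f by [].
rewrite /f.
have [k [Hn|Hn]] : exists k, n = (k.*2.+2)%N \/ n = (k.*2.+3)%N.
  exists (n./2).-1; have := odd_double_half n; case: (odd n) => E; [right|left]; lia.
- rewrite Hn.
  have -> : odd (k.*2.+2) = false by rewrite /= odd_double.
  have -> : ((k.*2.+2)./2).-1 = k by rewrite half_even.
  rewrite /=.
  have H : (3 * aa (k.*2.+2) + 1)%:R = (7 * 4 ^ k)%:R :> rat by rewrite (proj1 (closed k)).
  rewrite natrD !natrM natrX in H.
  lra.
- rewrite Hn.
  have -> : odd (k.*2.+3) = true by rewrite /= odd_double.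
  have -> : ((k.*2.+3)./2).-1 = k by rewrite (half_odd k.+1).
  rewrite /=.
  have H : (3 * aa (k.*2.+3) + 2)%:R = (14 * 4 ^ k)%:R :> rat by rewrite (proj2 (closed k)).
  rewrite natrD !natrM natrX in H.
  lra.
Qed.
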